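(* Let $\epsilon>0$. For every $\widehat\phi\in\mathcal{M}_\epsilon$ there exists a unique $\widehat\psi\in\mathcal{M}$ satisfying $$\frac{\widehat\psi_{i+1,j}-\widehat\psi_{i,j}}{\Delta t}-\frac{\sigma^2}{2}\frac{\widehat\psi_{i+1,j+1}-2\widehat\psi_{i+1,j}+\widehat\psi_{i+1,j-1}}{(\Delta x)^2}=\frac{1}{\sigma^2}f(x_j,\widehat\phi_{i+1,j}\widehat\psi_{i+1,j})\widehat\psi_{i+1,j},\quad 0\le i\le I-1,\ 0\le j\le J,$$ with $\widehat\psi_{0,j}=\frac{m_0(x_j)}{\widehat\phi_{0,j}}$ for all $j$ and the conventions $\widehat\psi_{i,-1}=\widehat\psi_{i,0}$, $\widehat\psi_{i,J+1}=\widehat\psi_{i,J}$. Hence $\widehat\Psi:\widehat\phi\in\mathcal{M}_\epsilon\mapsto\widehat\psi\in\mathcal{M}$ is well defined, and moreover $\widehat\Psi(\widehat\phi)\in\mathcal{M}_0$ for every $\widehat\phi\in\mathcal{M}_\epsilon$.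
   Context: Discrete setting: $\Omega=(0,1)$, $T>0$, $\sigma>0$; $m_0:[0,1]\to\mathbb{R}$ bounded with $m_0\ge0$. $f:[0,1]\times\mathbb{R}\to\mathbb{R}$ is continuous and nonincreasing in its second variable, bounded, and $f\le0$. For positive integers $I,J$: $\Delta t=T/I$, $\Delta x=1/J$, $x_j=j\Delta x$. $\mathcal{M}$ is the set of real matrices $(m_{i,j})_{0\le i\le I,0\le j\le J}$ and $\mathcal{M}_\epsilon=\{m\in\mathcal{M}: m_{i,j}\ge\epsilon\ \forall i,j\}$. *)

(* Defs.v *)
From Stdlib Require Import Reals.
Open Scope R_scope.

(* A real matrix (m_{i,j})_{0<=i<=I, 0<=j<=J} is modelled as a function
   nat -> nat -> R; only entries with i <= I, j <= J are meaningful. *)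
Definition mat := nat -> nat -> R.

Definition in_M_eps (I J : nat) (eps : R) (m : mat) : Prop :=
  forall i j, (i <= I)%nat -> (j <= J)%nat -> eps <= m i j.

Definition mat_eq (I J : nat) (a b : mat) : Prop :=
  forall i j, (i <= I)%nat -> (j <= J)%nat -> a i j = b i j.

(* Neighbours with the Neumann conventions psi_{i,-1} = psi_{i,0},
   psi_{i,J+1} = psi_{i,J}. *)
Definition jm1 (j : nat) : nat := (j - 1)%nat.           (* 0 - 1 = 0 *)
Definition jp1 (J j : nat) : nat := Nat.min (S j) J.     (* J + 1 -> J *)

Definition scheme (T sigma : R) (I J : nat) (f : R -> R -> R)
    (m0 : R -> R) (phi psi : mat) : Prop :=
  let dt := T / INR I in
  let dx := 1 / INR J in
  let x := fun j : nat => INR j * dx in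
  (forall i j, (i <= I - 1)%nat -> (j <= J)%nat ->
     (psi (S i) j - psi i j) / dt
     - sigma ^ 2 / 2 *
       ((psi (S i) (jp1 J j) - 2 * psi (S i) j + psi (S i) (jm1 j)) / dx ^ 2)
     = 1 / sigma ^ 2 * f (x j) (phi (S i) j * psi (S i) j) * psi (S i) j)
  /\ (forall j, (j <= J)%nat -> psi 0%nat j = m0 (x j) / phi 0%nat j).

(* Main.v *)
Require Import Defs.
From Stdlib Require Import Reals Lra Lia.
Open Scope R_scope.

Lemma cpt_plus (a b : R -> R) x : continuity_pt a x -> continuity_pt b x -> continuity_pt (fun s => a s + b s) x.
Proof. intros; apply (continuity_pt_plus a b); auto. Qed.
Lemma cpt_minus (a b : R -> R) x : continuity_pt a x -> continuity_pt b x -> continuity_pt (fun s => a s - b s) x.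
Proof. intros; apply (continuity_pt_minus a b); auto. Qed.
Lemma cpt_mult (a b : R -> R) x : continuity_pt a x -> continuity_pt b x -> continuity_pt (fun s => a s * b s) x.
Proof. intros; apply (continuity_pt_mult a b); auto. Qed.
Lemma cpt_const (c : R) x : continuity_pt (fun _ => c) x.
Proof. apply continuity_pt_const; intros ? ?; reflexivity. Qed.
Lemma cpt_id x : continuity_pt (fun s => s) x.
Proof. apply derivable_continuous_pt, derivable_pt_id. Qed.
Lemma cpt_comp (a b : R -> R) x : continuity_pt a x -> continuity_pt b (a x) -> continuity_pt (fun s => b (a s)) x.
Proof. intros; apply (continuity_pt_comp a b); auto. Qed.
Lemma cpt_eps (h : R -> R) y0 : (forall e, 0 < e -> exists d, 0 < d /\ forall y, Rabs (y - y0) < d -> Rabs (h y - h y0) < e) -> continuity_pt h y0.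
Proof.
  intros H e He. destruct (H e He) as [d [Hd Hy]]. exists d; split; [lra|].
  intros y [_ Hy']. simpl in *. unfold R_dist in *. apply Hy; auto.
Qed.

Definition stepeq (A B C : R) (g : nat -> R -> R) (J : nat) (u v : nat -> R) : Prop :=
  forall j, (j <= J)%nat ->
    A * (v j - u j) - B * (v (jp1 J j) - 2 * v j + v (jm1 j)) = C * g j (v j) * v j.

Lemma argmax (h : nat -> R) (J : nat) : exists j0, (j0 <= J)%nat /\ forall j, (j <= J)%nat -> h j <= h j0.
Proof.
  induction J as [|J IH].
  - exists 0%nat; split; [lia|]. intros j Hj. replace j with 0%nat by lia. lra.
  - destruct IH as [j0 [Hj0 Hm]]. destruct (Rle_dec (h j0) (h (S J))) as [Hle|Hlt].
    + exists (S J); split; [lia|]. intros j Hj. destruct (Nat.eq_dec j (S J)) as [->|Hn]; [lra|].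
      specialize (Hm j ltac:(lia)); lra.
    + exists j0; split; [lia|]. intros j Hj. destruct (Nat.eq_dec j (S J)) as [->|Hn]; [lra|].
      apply Hm; lia.
Qed.

Lemma jp1_le J j : (j <= J)%nat -> (jp1 J j <= J)%nat.
Proof. unfold jp1; lia. Qed.
Lemma jm1_le J j : (j <= J)%nat -> (jm1 j <= J)%nat.
Proof. unfold jm1; lia. Qed.

Lemma minp A B C g J u v : 0 < A -> 0 < B -> 0 < C ->
  (forall j y, (j <= J)%nat -> g j y <= 0) -> (forall j, (j <= J)%nat -> 0 <= u j) ->
  stepeq A B C g J u v -> forall j, (j <= J)%nat -> 0 <= v j.
Proof.
  intros HA HB HC Hg Hu Heq.
  destruct (argmax (fun k => - v k) J) as [j0 [Hj0 Hm]]. simpl in Hm.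
  assert (0 <= v j0).
  { destruct (Rle_lt_dec 0 (v j0)) as [h|h]; auto. exfalso.
    specialize (Heq j0 Hj0).
    pose proof (Hm _ (jp1_le J j0 Hj0)). pose proof (Hm _ (jm1_le J j0 Hj0)).
    pose proof (Hg j0 (v j0) Hj0). pose proof (Hu j0 Hj0).
    assert (0 <= B * (v (jp1 J j0) - 2 * v j0 + v (jm1 j0))) by (apply Rmult_le_pos; lra).
    assert (0 <= C * g j0 (v j0) * v j0).
    { rewrite Rmult_assoc. apply Rmult_le_pos; [lra|]. nra. }
    nra. }
  intros j Hj. specialize (Hm j Hj). lra.
Qed.

Lemma uniqstep A B C g J u v w : 0 < A -> 0 < B -> 0 < C ->
  (forall j y, (j <= J)%nat -> g j y <= 0) ->
  (forall j y1 y2, (j <= J)%nat -> y1 <= y2 -> g j y2 <= g j y1) ->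
  (forall j, (j <= J)%nat -> 0 <= u j) ->
  stepeq A B C g J u v -> stepeq A B C g J u w -> forall j, (j <= J)%nat -> v j <= w j.
Proof.
  intros HA HB HC Hg Hmon Hu Hv Hw.
  pose proof (minp _ _ _ _ _ _ _ HA HB HC Hg Hu Hv) as Pv.
  pose proof (minp _ _ _ _ _ _ _ HA HB HC Hg Hu Hw) as Pw.
  destruct (argmax (fun k => v k - w k) J) as [j0 [Hj0 Hm]]. simpl in Hm.
  assert (v j0 - w j0 <= 0).
  { destruct (Rle_lt_dec (v j0 - w j0) 0) as [h|h]; auto. exfalso.
    specialize (Hv j0 Hj0). specialize (Hw j0 Hj0).
    pose proof (Hm _ (jp1_le J j0 Hj0)). pose proof (Hm _ (jm1_le J j0 Hj0)).
    pose proof (Hg j0 (v j0) Hj0). pose proof (Hg j0 (w j0) Hj0).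
    pose proof (Hmon j0 (w j0) (v j0) Hj0 ltac:(lra)).
    pose proof (Pv j0 Hj0). pose proof (Pw j0 Hj0).
    set (d := v j0 - w j0) in *.
    assert (0 <= B * (d - (v (jp1 J j0) - w (jp1 J j0)) + (d - (v (jm1 j0) - w (jm1 j0))))) by (apply Rmult_le_pos; lra).
    assert (g j0 (v j0) * v j0 - g j0 (w j0) * w j0 <= 0).
    { assert (g j0 (v j0) * d <= 0) by nra.
      assert ((g j0 (v j0) - g j0 (w j0)) * w j0 <= 0) by nra.
      unfold d in *; nra. }
    assert (C * (g j0 (v j0) * v j0 - g j0 (w j0) * w j0) <= 0) by nra.
    assert (0 < A * d) by nra.
    unfold d in *. nra. }
  intros j Hj. specialize (Hm j Hj). lra.
Qed.

Fixpoint wseq (A B C : R) (g : nat -> R -> R) (u : nat -> R) (s : R) (k : nat) : R * R :=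
  match k with
  | O => (s, s)
  | S k => let p := wseq A B C g u s k in
           (snd p, 2 * snd p - fst p + (A * (snd p - u k) - C * g k (snd p) * snd p) * / B)
  end.

Lemma wseq_fst A B C g u s k : fst (wseq A B C g u s k) = snd (wseq A B C g u s (jm1 k)).
Proof.
  destruct k; [reflexivity|]. unfold jm1. replace (S k - 1)%nat with k by lia. reflexivity.
Qed.

Lemma wseq_cont A B C g u J : (forall j, (j <= J)%nat -> continuity (g j)) ->
  forall k, (k <= J)%nat -> forall x,
    continuity_pt (fun s => fst (wseq A B C g u s k)) x /\ continuity_pt (fun s => snd (wseq A B C g u s k)) x.
Proof.
  intros Hg k. induction k as [|k IH]; intros Hk x.
  - simpl. split; apply cpt_id.
  - destruct (IH ltac:(lia) x) as [H1 H2]. simpl. split; [exact H2|].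
    apply cpt_plus; [apply cpt_minus; [apply cpt_mult; [apply cpt_const|exact H2]|exact H1]|].
    apply cpt_mult; [|apply cpt_const].
    apply cpt_minus; [apply cpt_mult; [apply cpt_const|apply cpt_minus; [exact H2|apply cpt_const]]|].
    apply cpt_mult; [apply cpt_mult; [apply cpt_const|]|exact H2].
    apply cpt_comp; [exact H2|]. apply Hg; lia.
Qed.

Lemma shoot A B C g J u : 0 < A -> 0 < B -> 0 < C ->
  (forall j y, (j <= J)%nat -> g j y <= 0) ->
  (forall j, (j <= J)%nat -> continuity (g j)) ->
  (forall j, (j <= J)%nat -> 0 <= u j) ->
  exists v, stepeq A B C g J u v.
Proof.
  intros HA HB HC Hg Hc Hu.
  set (W := wseq A B C g u).
  set (F := fun s => A * (snd (W s J) - u J) - B * (fst (W s J) - snd (W s J))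
                     - C * g J (snd (W s J)) * snd (W s J)).
  assert (HF : continuity F).
  { intros x. destruct (wseq_cont A B C g u J Hc J (le_n _) x) as [H1 H2]. unfold F.
    apply cpt_minus; [apply cpt_minus|].
    - apply cpt_mult; [apply cpt_const|apply cpt_minus; [exact H2|apply cpt_const]].
    - apply cpt_mult; [apply cpt_const|apply cpt_minus; [exact H1|exact H2]].
    - apply cpt_mult; [apply cpt_mult; [apply cpt_const|]|exact H2].
      apply cpt_comp; [exact H2|]. apply Hc; lia. }
  assert (HiB : 0 < / B) by (apply Rinv_0_lt_compat; lra).
  assert (L : forall k, (k <= J)%nat -> snd (W 0 k) <= 0 /\ snd (W 0 k) <= fst (W 0 k)).
  { induction k as [|k IH]; intros Hk.
    - simpl. lra.
    - destruct (IH ltac:(lia)) as [H1 H2]. unfold W in *; simpl.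
      set (c := snd (wseq A B C g u 0 k)) in *. set (p := fst (wseq A B C g u 0 k)) in *.
      pose proof (Hg k c ltac:(lia)). pose proof (Hu k ltac:(lia)).
      assert (X : A * (c - u k) - C * g k c * c <= 0).
      { assert (0 <= C * g k c * c). { rewrite Rmult_assoc. apply Rmult_le_pos; nra. } nra. }
      assert ((A * (c - u k) - C * g k c * c) * / B <= 0) by nra.
      split; lra. }
  destruct (argmax u J) as [j0 [Hj0 Hmax]].
  set (Sb := u j0). assert (HSb : Sb = u j0) by reflexivity. clearbody Sb. assert (HS : 0 <= Sb) by (rewrite HSb; apply Hu; auto).
  assert (U : forall k, (k <= J)%nat -> Sb <= snd (W Sb k) /\ fst (W Sb k) <= snd (W Sb k)).
  { induction k as [|k IH]; intros Hk.
    - simpl. lra.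
    - destruct (IH ltac:(lia)) as [H1 H2]. unfold W in *; simpl.
      set (c := snd (wseq A B C g u Sb k)) in *. set (p := fst (wseq A B C g u Sb k)) in *.
      pose proof (Hg k c ltac:(lia)). pose proof (Hmax k ltac:(lia)).
      assert (X : 0 <= A * (c - u k) - C * g k c * c).
      { assert (0 <= C * (- g k c * c)) by (apply Rmult_le_pos; [lra|apply Rmult_le_pos; lra]). nra. }
      assert (0 <= (A * (c - u k) - C * g k c * c) * / B) by nra.
      split; lra. }
  destruct (L J (le_n _)) as [L1 L2]. destruct (U J (le_n _)) as [U1 U2].
  assert (F0 : F 0 <= 0).
  { unfold F. pose proof (Hg J (snd (W 0 J)) (le_n _)). pose proof (Hu J (le_n _)).
    assert (0 <= C * (g J (snd (W 0 J)) * snd (W 0 J))) by (apply Rmult_le_pos; nra). nra. }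
  assert (FS : 0 <= F Sb).
  { unfold F. pose proof (Hg J (snd (W Sb J)) (le_n _)). pose proof (Hmax J (le_n _)).
    assert (0 <= C * (- g J (snd (W Sb J)) * snd (W Sb J))) by (apply Rmult_le_pos; nra). nra. }
  destruct (IVT_cor F 0 Sb HF HS ltac:(nra)) as [s [Hs Fs]].
  exists (fun k => snd (W s k)). intros j Hj.
  destruct (Nat.eq_dec j J) as [->|Hne].
  - unfold jp1. rewrite Nat.min_r by lia. unfold W; rewrite <- wseq_fst.
    unfold F, W in Fs. lra.
  - unfold jp1. rewrite Nat.min_l by lia. unfold W; rewrite <- wseq_fst.
    unfold W; simpl.
    set (c := snd (wseq A B C g u s j)). set (p := fst (wseq A B C g u s j)).
    field. lra.
Qed.

Lemma xj_in J j : (1 <= J)%nat -> (j <= J)%nat -> 0 <= INR j * (1 / INR J) <= 1.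
Proof.
  intros HJ Hj. assert (0 < INR J) by (apply lt_0_INR; lia).
  assert (INR j <= INR J) by (apply le_INR; auto). pose proof (pos_INR j).
  split.
  - apply Rmult_le_pos; [lra|]. unfold Rdiv. rewrite Rmult_1_l. left; apply Rinv_0_lt_compat; lra.
  - replace (INR j * (1 / INR J)) with (INR j / INR J) by (unfold Rdiv; ring).
    apply (Rmult_le_reg_r (INR J)); [lra|]. unfold Rdiv. rewrite Rmult_assoc, Rinv_l by lra. lra.
Qed.

Lemma scheme_to T sigma I J f m0 phi psi :
  scheme T sigma I J f m0 phi psi ->
  (forall i, (i <= I - 1)%nat -> stepeq (/ (T / INR I)) (sigma^2/2/(1/INR J)^2) (1/sigma^2)
        (fun j y => f (INR j * (1 / INR J)) (phi (S i) j * y)) J (psi i) (psi (S i)))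
  /\ (forall j, (j <= J)%nat -> psi 0%nat j = m0 (INR j * (1 / INR J)) / phi 0%nat j).
Proof.
  unfold scheme. intros [H1 H2]. split; [|exact H2].
  intros i Hi j Hj. specialize (H1 i j Hi Hj). eapply eq_trans; [|exact H1].
  unfold Rdiv; ring.
Qed.

Lemma scheme_of T sigma I J f m0 phi psi :
  (forall i, (i <= I - 1)%nat -> stepeq (/ (T / INR I)) (sigma^2/2/(1/INR J)^2) (1/sigma^2)
        (fun j y => f (INR j * (1 / INR J)) (phi (S i) j * y)) J (psi i) (psi (S i))) ->
  (forall j, (j <= J)%nat -> psi 0%nat j = m0 (INR j * (1 / INR J)) / phi 0%nat j) ->
  scheme T sigma I J f m0 phi psi.
Proof.
  unfold scheme. intros H1 H2. split; [|exact H2].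
  intros i j Hi Hj. specialize (H1 i Hi j Hj). eapply eq_trans; [|exact H1].
  unfold Rdiv; ring.
Qed.

Lemma stepeq_ext A B C g J u u' v : (forall j, (j <= J)%nat -> u' j = u j) ->
  stepeq A B C g J u v -> stepeq A B C g J u' v.
Proof. intros Hu H j Hj. rewrite Hu by auto. apply H; auto. Qed.

Theorem proposition9
  (T sigma : R) (I J : nat) (m0 : R -> R) (f : R -> R -> R) (eps : R)
  (hT : 0 < T) (hsigma : 0 < sigma) (hI : (1 <= I)%nat) (hJ : (1 <= J)%nat)
  (hm0_bdd : exists M, forall x, 0 <= x <= 1 -> Rabs (m0 x) <= M)
  (hm0_nonneg : forall x, 0 <= x <= 1 -> 0 <= m0 x)
  (hf_cont : forall x y, 0 <= x <= 1 -> forall e, 0 < e -> exists d, 0 < d /\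
      forall x' y', 0 <= x' <= 1 -> Rabs (x' - x) < d -> Rabs (y' - y) < d ->
        Rabs (f x' y' - f x y) < e)
  (hf_noninc : forall x y1 y2, 0 <= x <= 1 -> y1 <= y2 -> f x y2 <= f x y1)
  (hf_bdd : exists M, forall x y, 0 <= x <= 1 -> Rabs (f x y) <= M)
  (hf_nonpos : forall x y, 0 <= x <= 1 -> f x y <= 0)
  (heps : 0 < eps)
  (phi : mat) (hphi : in_M_eps I J eps phi) :
  exists psi : mat,
    scheme T sigma I J f m0 phi psi
    /\ (forall psi' : mat, scheme T sigma I J f m0 phi psi' -> mat_eq I J psi' psi)
    /\ in_M_eps I J 0 psi.
Proof.
  set (A := / (T / INR I)). set (B := sigma^2/2/(1/INR J)^2). set (C := 1/sigma^2).
  set (G := fun k j y => f (INR j * (1 / INR J)) (phi k j * y)).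
  assert (HI0 : 0 < INR I) by (apply lt_0_INR; lia).
  assert (HJ0 : 0 < INR J) by (apply lt_0_INR; lia).
  assert (HA : 0 < A) by (unfold A; apply Rinv_0_lt_compat, Rdiv_lt_0_compat; lra).
  assert (HB : 0 < B).
  { unfold B. assert (0 < 1 / INR J) by (apply Rdiv_lt_0_compat; lra).
    assert (0 < sigma ^ 2) by (apply pow_lt; lra).
    apply Rdiv_lt_0_compat; [lra|]. apply pow_lt; lra. }
  assert (HC : 0 < C) by (unfold C; apply Rdiv_lt_0_compat; [lra|apply pow_lt; lra]).
  assert (Gneg : forall k j y, (j <= J)%nat -> G k j y <= 0).
  { intros k j y Hj. apply hf_nonpos, xj_in; auto. }
  assert (Gmon : forall k j y1 y2, (k <= I)%nat -> (j <= J)%nat -> y1 <= y2 -> G k j y2 <= G k j y1).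
  { intros k j y1 y2 Hk Hj Hy. apply hf_noninc; [apply xj_in; auto|].
    pose proof (hphi k j Hk Hj). nra. }
  assert (Gcont : forall k j, (j <= J)%nat -> continuity (G k j)).
  { intros k j Hj y. unfold G.
    apply (cpt_comp (fun y => phi k j * y) (f (INR j * (1 / INR J)))).
    - apply cpt_mult; [apply cpt_const|apply cpt_id].
    - apply cpt_eps. intros e He. destruct (hf_cont (INR j * (1 / INR J)) (phi k j * y) (xj_in J j hJ Hj) e He) as [d [Hd Hc]].
      exists d; split; auto. intros y' Hy'. apply Hc; auto. apply xj_in; auto.
      rewrite Rminus_diag, Rabs_R0; auto. }
  assert (build : forall n, (n <= I)%nat -> exists psi : mat,
     (forall j, (j <= J)%nat -> psi 0%nat j = m0 (INR j * (1 / INR J)) / phi 0%nat j)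
     /\ (forall i, (S i <= n)%nat -> stepeq A B C (G (S i)) J (psi i) (psi (S i)))
     /\ (forall k j, (k <= n)%nat -> (j <= J)%nat -> 0 <= psi k j)).
  { induction n as [|n IH]; intros Hn.
    - exists (fun k j => m0 (INR j * (1 / INR J)) / phi 0%nat j). split; [|split].
      + reflexivity.
      + intros i Hi; lia.
      + intros k j Hk Hj. pose proof (hphi 0%nat j ltac:(lia) Hj).
        apply Rmult_le_pos; [apply hm0_nonneg, xj_in; auto|]. left; apply Rinv_0_lt_compat; lra.
    - destruct (IH ltac:(lia)) as [psi [P0 [P1 P2]]].
      destruct (shoot A B C (G (S n)) J (psi n) HA HB HC (Gneg (S n)) (Gcont (S n))
                  (fun j Hj => P2 n j (le_n _) Hj)) as [v Hv].
      pose proof (minp _ _ _ _ _ _ _ HA HB HC (Gneg (S n)) (fun j Hj => P2 n j (le_n _) Hj) Hv) as Pv.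
      exists (fun k j => if Nat.eqb k (S n) then v j else psi k j). split; [|split].
      + intros j Hj. simpl. apply P0; auto.
      + intros i Hi. destruct (Nat.eq_dec i n) as [->|Hne].
        * rewrite Nat.eqb_refl. assert (E : Nat.eqb n (S n) = false) by (apply Nat.eqb_neq; lia).
          rewrite E. exact Hv.
        * assert (E1 : Nat.eqb i (S n) = false) by (apply Nat.eqb_neq; lia).
          assert (E2 : Nat.eqb (S i) (S n) = false) by (apply Nat.eqb_neq; lia).
          rewrite E1, E2. apply P1; lia.
      + intros k j Hk Hj. destruct (Nat.eqb_spec k (S n)).
        * apply Pv; auto.
        * apply P2; auto; lia. }
  destruct (build I (le_n _)) as [psi [P0 [P1 P2]]].
  exists psi. split; [|split].
  - apply scheme_of; auto. intros i Hi. apply P1. lia.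
  - intros psi' Hs. destruct (scheme_to _ _ _ _ _ _ _ _ Hs) as [Q1 Q0].
    intros k j Hk Hj. revert j Hj. induction k as [|k IH]; intros j Hj.
    + rewrite P0, Q0; auto.
    + assert (E1 := Q1 k ltac:(lia)). fold A B C G in E1.
      assert (E2 := stepeq_ext _ _ _ _ _ _ _ _ (fun j0 Hj0 => eq_sym (IH ltac:(lia) j0 Hj0)) E1).
      assert (E3 := P1 k Hk).
      assert (Hu : forall j, (j <= J)%nat -> 0 <= psi k j) by (intros; apply P2; auto; lia).
      apply Rle_antisym.
      * apply (uniqstep A B C (G (S k)) J (psi k)); auto. all: intros; apply Gmon; auto.
      * apply (uniqstep A B C (G (S k)) J (psi k)); auto. all: intros; apply Gmon; auto.
  - intros k j Hk Hj. apply P2; auto.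
Qed.
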